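(* Let $\lambda\in(0,1)$ and let $G$ be a finite simple connected graph with $n\ge 2$ vertices. Then $$\min_{1\le D\le n-1}\left[\frac{\lambda\left[1-(D+1)\lambda^{D}+D\lambda^{D+1}\right]}{(\lambda-1)^2}+(n-D-1)D\lambda^{D}\right]\;\le\; mt^{e}_{\lambda}(G).$$ Moreover, this lower bound is attained at the starting vertex of a broom on $n$ vertices, i.e. there is a broom $B$ on $n$ vertices with $mt^{e}_{\lambda}(B)$ equal to the left-hand side, the minimum of $t^e_\lambda$ over the vertices of $B$ being attained at its starting vertex.
   Context: $d(u,v)$ denotes graph distance. For a vertex $u$ of $G=(V,E)$, $t^{e}_{\lambda}(u)=\sum_{v\in V\setminus\{u\}} d(u,v)\lambda^{d(u,v)}$, and $mt^{e}_{\lambda}(G)=\min\{t^{e}_{\lambda}(u):u\in V\}$. A broom on $n$ vertices (with parameter $D$, $1\le D\le n-1$) is the graph consisting of a path $u=v_0v_1\cdots v_D$ together with $n-D-1$ further vertices, each adjacent only to $v_{D-1}$; equivalently, it is obtained by identifying a pendant vertex of a star with an end-vertex of a path. The vertex $u=v_0$ is called the starting vertex of the broom. *)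

(* Defs.v *)
From mathcomp Require Import all_boot all_order all_algebra.
Set Implicit Arguments. Unset Strict Implicit. Unset Printing Implicit Defensive.
Import Order.TTheory GRing.Theory Num.Theory.

Section Defs.
Variable T : finType.
Variable e : rel T.

Definition simple_graph := symmetric e /\ irreflexive e.
Definition connected_graph := forall u v : T, connect e u v.

Fixpoint ball (k : nat) (u : T) : {set T} :=
  match k with
  | 0 => [set u]
  | k.+1 => ball k u :|: [set y | [exists x in ball k u, e x y]]
  end.

(* graph distance: least k with v within k steps of u (correct for connected
   graphs, where d(u,v) < #|T|) *)
Definition dist (u v : T) : nat := find (fun k => v \in ball k u) (iota 0 #|T|).

Open Scope ring_scope.
Variable R : realFieldType.

Definition te (lam : R) (u : T) : R :=
  \sum_(v in T | v != u) (dist u v)%:R * lam ^+ dist u v.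

Definition mte (lam : R) : R :=
  match [pick u : T] with
  | Some u0 => \big[Num.min/te lam u0]_(u : T) te lam u
  | None => 0
  end.
End Defs.

(* The broom on n vertices 0..n-1 with parameter D: path 0-1-...-D and every
   vertex j > D adjacent to D-1. Starting vertex is 0. *)
Definition broom_edge (n D : nat) (i j : 'I_n) : bool :=
  ((j == i.+1 :> nat) && (j <= D)%N) || ((i == D.-1 :> nat) && (D < j)%N).
Definition broom (n D : nat) : rel 'I_n :=
  fun i j => broom_edge D i j || broom_edge D j i.
Arguments broom n D : clear implicits.

Open Scope ring_scope.
Definition broom_bound (R : realFieldType) (n D : nat) (lam : R) : R :=
  lam * (1 - (D.+1)%:R * lam ^+ D + D%:R * lam ^+ D.+1) / (lam - 1) ^+ 2
  + (n - D - 1)%:R * D%:R * lam ^+ D.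

Definition min_broom_bound (R : realFieldType) (n : nat) (lam : R) : R :=
  \big[Num.min/broom_bound n 1 lam]_(1 <= D < n) broom_bound n D lam.

(* Main.v *)
Require Import Defs.
From mathcomp Require Import all_boot all_order all_algebra zify ring lra.
Import Order.TTheory GRing.Theory Num.Theory.
Set Implicit Arguments. Unset Strict Implicit.

Section G.
Variable T : finType.
Variable e : rel T.
Variable u : T.

Lemma ball_sub k : ball e k u \subset ball e k.+1 u.
Proof. by rewrite /= subsetUl. Qed.

Lemma ball_mono k k' : (k <= k')%N -> ball e k u \subset ball e k' u.
Proof.
move=> /subnKC <-; elim: (k' - k)%N => [|d IH]; first by rewrite addn0.
by rewrite addnS (subset_trans IH) // ball_sub.
Qed.

Lemma ball_step k x y : x \in ball e k u -> e x y -> y \in ball e k.+1 u.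
Proof. by move=> Hx Hxy /=; rewrite in_setU in_set; apply/orP; right; apply/existsP; exists x; rewrite Hx. Qed.

Lemma ball_path p : forall k y, y \in ball e k u -> path e y p ->
  last y p \in ball e (k + size p) u.
Proof.
elim: p => [|z p IH] k y Hy /=; first by rewrite addn0.
move=> /andP[Hyz Hp]; rewrite addnS -addSn; apply: IH Hp.
exact: ball_step Hyz.
Qed.

Lemma connect_ball v : connect e u v -> exists2 k, (k < #|T|)%N & v \in ball e k u.
Proof.
move=> /connectP[p Hp ->]; case: (shortenP Hp) => p' Hp' Hu _.
exists (size p'); last by have := @ball_path p' 0 u; rewrite /= in_set1 eqxx add0n; apply.
have := card_uniqP Hu; move=> /= <-; exact: max_card.
Qed.

Lemma find_iota (P : pred nat) N c : (c < N)%N -> P c -> (forall j, (j < c)%N -> ~~ P j) ->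
  find P (iota 0 N) = c.
Proof.
move=> cN Pc Hj.
have Hh : has P (iota 0 N) by apply/hasP; exists c; rewrite ?mem_iota.
have fl := Hh; rewrite has_find size_iota in fl.
have := nth_find 0 Hh; rewrite nth_iota // add0n => Pf.
case: (ltngtP (find P (iota 0 N)) c) => // H.
  by have := Hj _ H; rewrite Pf.
by have := before_find 0 H; rewrite nth_iota // add0n Pc.
Qed.

Lemma dist_le v k : (k < #|T|)%N -> v \in ball e k u -> (dist e u v <= k)%N.
Proof.
move=> kN Hk; rewrite leqNgt; apply/negP => H.
by have := before_find 0 H; rewrite nth_iota // add0n Hk.
Qed.

Lemma dist_min v j : (j < dist e u v)%N -> v \notin ball e j u.
Proof.
move=> H; have := before_find 0 H.
have: (dist e u v <= #|T|)%N by rewrite /dist; have := find_size (fun k => v \in ball e k u) (iota 0 #|T|); rewrite size_iota.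
move=> H2; rewrite nth_iota ?add0n => [->//|]; exact: leq_trans H H2.
Qed.

Lemma dist_ball v k : (k < #|T|)%N -> v \in ball e k u ->
  (dist e u v < #|T|)%N /\ v \in ball e (dist e u v) u.
Proof.
move=> kN Hk.
have Hh : has (fun k => v \in ball e k u) (iota 0 #|T|) by apply/hasP; exists k; rewrite ?mem_iota.
have fl := Hh; rewrite has_find size_iota in fl.
by have := nth_find 0 Hh; rewrite nth_iota // add0n.
Qed.

Lemma dist_uu : (0 < #|T|)%N -> dist e u u = 0%N.
Proof. by move=> H; apply: find_iota => //=; rewrite in_set1. Qed.

Lemma dist_pos v : v != u -> (0 < dist e u v)%N.
Proof.
move=> H; rewrite lt0n; apply/eqP => H0; rewrite /dist in H0.
case: (boolP (has (fun k => v \in ball e k u) (iota 0 #|T|))) => Hh.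
  have := nth_find 0 Hh; rewrite H0.
  have Hs : (0 < #|T|)%N by apply/card_gt0P; exists u.
  by rewrite nth_iota // add0n /= in_set1 (negbTE H).
move: H0; rewrite (hasNfind Hh) size_iota => H0.
by move: (max_card (pred1 u)); rewrite H0 card1.
Qed.
End G.

Section G2.
Variable T : finType.
Variable e : rel T.
Variable u : T.
Hypothesis Hc : forall v, exists2 k, (k < #|T|)%N & v \in ball e k u.

Lemma dist_lt v : (dist e u v < #|T|)%N.
Proof. by case: (Hc v) => k H1 H2; case: (dist_ball H1 H2). Qed.

Lemma dist_in v : v \in ball e (dist e u v) u.
Proof. by case: (Hc v) => k H1 H2; case: (dist_ball H1 H2). Qed.

Lemma layers d : forall v, dist e u v = d -> forall j, (j <= d)%N -> exists w, dist e u w = j.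
Proof.
elim: d => [|d IH] v Hv j Hj.
  by exists v; move: Hj; rewrite leqn0 Hv => /eqP <-.
case: (ltngtP j d.+1) Hj => // Hj _; last by exists v; rewrite Hv Hj.
have Hin := dist_in v; rewrite Hv /= in_setU in Hin.
have Hnot : v \notin ball e d u by apply: dist_min; rewrite Hv.
rewrite (negbTE Hnot) /= in_set in Hin.
case/existsP: Hin => x /andP[Hx Hxv].
have dN : (d < #|T|)%N by rewrite -ltnS -Hv (leq_trans (dist_lt v)) ?leqnSn.
have Hxd := dist_le dN Hx.
have Hxe : dist e u x = d.
  apply/eqP; rewrite eqn_leq Hxd /= leqNgt; apply/negP => Hlt.
  have := ball_step (dist_in x) Hxv => Hv2.
  have : v \in ball e d u by apply: (subsetP (ball_mono _ _ Hlt)).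
  by rewrite (negbTE Hnot).
exact: IH Hxe j Hj.
Qed.
End G2.

Section RR.
Local Open Scope ring_scope.

Section Rl.
Variable R : realFieldType.
Variable lam : R.
Hypothesis l0 : 0 < lam.
Hypothesis l1 : lam < 1.

Definition f (k : nat) : R := k%:R * lam ^+ k.

Lemma f_step j : f j.+1 - f j = lam ^+ j * ((j%:R + 1) * lam - j%:R).
Proof. by rewrite /f exprS -natr1; ring. Qed.

Lemma f_up a b : (forall j, (a <= j < b)%N -> f j <= f j.+1) -> (a <= b)%N -> f a <= f b.
Proof.
elim: b => [|b IH] H; first by rewrite leqn0 => /eqP ->.
rewrite leq_eqVlt => /orP[/eqP -> //|]; rewrite ltnS => Hab.
apply: le_trans (IH _ Hab) (H _ _) => [j /andP[H1 H2]|]; first by apply: H; rewrite H1 ltnW.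
by rewrite Hab leqnn.
Qed.

Lemma f_down a b : (forall j, (a <= j < b)%N -> f j.+1 <= f j) -> (a <= b)%N -> f b <= f a.
Proof.
elim: b => [|b IH] H; first by rewrite leqn0 => /eqP ->.
rewrite leq_eqVlt => /orP[/eqP -> //|]; rewrite ltnS => Hab.
apply: le_trans (H _ _) (IH _ Hab) => [|j /andP[H1 H2]]; last by apply: H; rewrite H1 ltnW.
by rewrite Hab leqnn.
Qed.

Lemma f_uni k D : (1 <= k <= D)%N -> Num.min (f 1) (f D) <= f k.
Proof.
move=> /andP[k1 kD].
have lj : forall j, 0 <= lam ^+ j by move=> j; rewrite exprn_ge0 // ltW.
have Hk : (k%:R = k.-1%:R + 1 :> R) by rewrite natr1 prednK.
case: (lerP (k.-1%:R) (k%:R * lam)) => Hc; rewrite Hk in Hc.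
  rewrite ge_min; apply/orP; left; apply: f_up => // j /andP[j1 jk].
  rewrite -subr_ge0 f_step mulr_ge0 //.
  have Hj : (j%:R <= k.-1%:R :> R) by rewrite ler_nat; lia.
  have : 0 <= (k.-1%:R - j%:R) * (1 - lam) :> R by rewrite mulr_ge0 // subr_ge0 // ltW.
  nra.
rewrite ge_min; apply/orP; right; apply: f_down => // j /andP[kj jD].
rewrite -subr_le0 f_step.
have Hj : (k.-1%:R <= j%:R :> R) by rewrite ler_nat; lia.
have : 0 <= (j%:R - k.-1%:R) * (1 - lam) :> R by rewrite mulr_ge0 // subr_ge0 // ltW.
move=> H2; rewrite mulr_ge0_le0 //; nra.
Qed.

Lemma sumf D : (\sum_(j < D.+1) f j) * (lam - 1)^+2 =
  lam * (1 - (D.+1)%:R * lam ^+ D + D%:R * lam ^+ D.+1).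
Proof.
elim: D => [|D IH]; first by rewrite big_ord_recr big_ord0 /f /=; ring.
rewrite big_ord_recr /= mulrDl IH /f !exprS -!natr1; ring.
Qed.

Lemma sumf_div D : \sum_(j < D.+1) f j =
  lam * (1 - (D.+1)%:R * lam ^+ D + D%:R * lam ^+ D.+1) / (lam - 1)^+2.
Proof.
by rewrite -sumf mulfK // expf_neq0 // subr_eq0 lt_eqF.
Qed.
End Rl.

End RR.

Section MM.
Local Open Scope ring_scope.

Section M.
Variable T : finType.
Variable e : rel T.
Variable u : T.
Hypothesis Hc : forall v, exists2 k, (k < #|T|)%N & v \in ball e k u.
Hypothesis HN : (2 <= #|T|)%N.
Variable R : realFieldType.
Variable lam : R.
Hypothesis l0 : 0 < lam.
Hypothesis l1 : lam < 1.

Local Notation d := (dist e u).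
Local Notation N := #|T|.
Local Notation f := (f lam).

Lemma te_f : te e lam u = \sum_(v | v != u) f (d v).
Proof. by apply: eq_bigl => v. Qed.

Definition pd v : 'I_N := Ordinal (dist_lt Hc v).

Lemma main_bound : exists2 D, (1 <= D < N)%N &
  N%:R * Num.min (f 1) (f D) + \sum_(k < D.+1) (f k - Num.min (f 1) (f D)) <= te e lam u.
Proof.
have N0 : (0 < N)%N by lia.
pose D := \max_(v : T) d v.
have [vD HvD] := bigop.eq_bigmax d N0.
have dD : forall v, (d v <= D)%N by move=> v; exact: leq_bigmax.
have [w Hw] : exists w, w != u.
  have : (0 < #|predC1 u|)%N by rewrite cardC1; lia.
  by case/card_gt0P => w Hw; exists w.
exists D.
  apply/andP; split; first by apply: leq_trans (dist_pos e Hw) (dD w).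
  by rewrite /D HvD dist_lt.
set m := Num.min (f 1) (f D).
have Hd0 : forall v, d v = 0%N -> v = u.
  by move=> v H; apply/eqP; apply: contraT => /(dist_pos e); rewrite H.
have Hsum : \sum_(v : T) (f (d v) - m) = te e lam u - N%:R * m.
  rewrite sumrB sumr_const (bigD1 u) //= te_f.
  rewrite dist_uu // /f mul0r add0r.
  by rewrite mulr_natl.
have Hpart : \sum_(v : T) (f (d v) - m) = \sum_(k : 'I_N) \sum_(v | pd v == k) (f (d v) - m).
  by rewrite (partition_big pd predT).
have Hk : forall k : 'I_N, (if (k < D.+1)%N then f k - m else 0) <= \sum_(v | pd v == k) (f (d v) - m).
  move=> k; case: ifP => kD.
    have [w' Hw'] := layers Hc (esym HvD) kD.
    rewrite (bigD1 w') /=; last by apply/eqP/val_inj; rewrite /= Hw'.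
    rewrite Hw' lerDl sumr_ge0 // => v /andP[/eqP Hv Hvw].
    have dv : d v = k by rewrite -Hv.
    rewrite dv subr_ge0.
    case: (posnP k) => k0.
      move: Hvw; rewrite (Hd0 v); last by rewrite dv k0.
      by rewrite (Hd0 w') ?eqxx // Hw' k0.
    have kD' : (1 <= k <= D)%N by rewrite k0.
    exact: (f_uni l0 l1 kD').
  rewrite big1 // => v /eqP Hv.
  have : (d v < D.+1)%N by rewrite ltnS dD.
  by rewrite -[d v]/(nat_of_ord (pd v)) Hv kD.
have DN : (D.+1 <= N)%N by rewrite /D HvD dist_lt.
have H2 : \sum_(k : 'I_N) (if (k < D.+1)%N then f k - m else 0) = \sum_(k < D.+1) (f k - m).
  by rewrite (big_ord_widen N (fun k => f k - m) DN) [RHS]big_mkcond.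
have : \sum_(k : 'I_N) (if (k < D.+1)%N then f k - m else 0) <= te e lam u - N%:R * m.
  by rewrite -Hsum Hpart; exact: ler_sum.
rewrite -H2; lra.
Qed.

Lemma bb_sum n D : broom_bound n D lam = \sum_(j < D.+1) f j + (n - D - 1)%:R * f D.
Proof. by rewrite /broom_bound (sumf_div l1) /f mulrA. Qed.

Lemma minbb_le n D : (1 <= D < n)%N -> min_broom_bound n lam <= broom_bound n D lam.
Proof.
move=> HD; rewrite /min_broom_bound; apply: ge_bigmin_seq => //.
by rewrite mem_index_iota.
Qed.

Lemma te_ge : min_broom_bound N lam <= te e lam u.
Proof.
have [D HD Hb] := main_bound.
move: Hb; set m := Num.min (f 1) (f D) => Hb.
have DN : (D.+1 <= N)%N by case/andP: HD.
case: (lerP (f D) (f 1)) => Hf.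
  have mE : m = f D by rewrite /m min_r.
  apply: le_trans (minbb_le HD) _; apply: le_trans Hb; rewrite bb_sum.
  rewrite sumrB sumr_const card_ord -mE.
  have -> : (N - D - 1)%:R = N%:R - D%:R - 1 :> R.
    by rewrite -subnDA addn1 natrB // -natr1; ring.
  rewrite -[m *+ D.+1]mulr_natr -natr1 le_eqVlt; apply/orP; left; apply/eqP; ring.
have mE : m = f 1 by rewrite /m min_l // ltW.
have H1 : (1 <= 1 < N)%N by lia.
apply: le_trans (minbb_le H1) _; apply: le_trans Hb; rewrite bb_sum.
rewrite big_ord_recl big_ord_recl big_ord0 /= -mE.
have f0 : f 0 = 0 by rewrite /f mul0r.
have -> : (N - 1 - 1)%:R = N%:R - 2%:R :> R.
  by rewrite -subnDA addn1 natrB.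
have Hs : 0 <= \sum_(i < D) (f (bump 0 i) - m).
  apply: sumr_ge0 => i _; rewrite subr_ge0 /m; apply: f_uni => //.
  by rewrite /bump /= add1n ltn_ord.
rewrite f0 mE in Hs *; rewrite -mE.
rewrite [X in _ <= _ + X]big_ord_recl /= f0; rewrite -mE in Hs.
lra.
Qed.
End M.

End MM.

Section BB.
Local Open Scope ring_scope.

Lemma ball_connect (T : finType) (e : rel T) u k v : v \in ball e k u -> connect e u v.
Proof.
elim: k v => [|k IH] v /=; first by rewrite in_set1 => /eqP ->; exact: connect0.
rewrite in_setU in_set => /orP[/IH //|/existsP[x /andP[Hx Hxv]]].
exact: connect_trans (IH _ Hx) (connect1 Hxv).
Qed.

Section Broom.
Variables n D : nat.
Hypothesis D1 : (1 <= D)%N.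
Hypothesis Dn : (D < n)%N.
Variable z : 'I_n.
Hypothesis Hz : nat_of_ord z = 0%N.

Lemma ball_broom k : ball (broom n D) k z = [set j : 'I_n | (j <= k)%N || (D <= k)%N].
Proof.
elim: k => [|k IH].
  apply/setP => j; rewrite /= in_set1 in_set -val_eqE /= Hz leqn0.
  by rewrite (_ : (D <= 0)%N = false) ?orbF //; lia.
apply/setP => j; rewrite /= in_setU IH !in_set.
apply/idP/idP.
  case/orP => [H|/existsP[x /andP[Hx Hxj]]]; first by move: H; lia.
  by move: Hx Hxj; rewrite in_set /broom /broom_edge; lia.
case: (boolP ((j <= k)%N || (D <= k)%N)) => // H1 H2.
have kn : (k < n)%N by lia.
apply/existsP; exists (Ordinal kn); rewrite in_set /broom /broom_edge /=.
by move: H1 H2; lia.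
Qed.

Lemma dist_broom j : dist (broom n D) z j = minn j D.
Proof.
apply: find_iota => [|/=|i Hi /=]; rewrite ?card_ord ?ball_broom ?in_set; have := ltn_ord j; lia.
Qed.

Lemma broom_sym : symmetric (broom n D).
Proof. by move=> x y; rewrite /broom orbC. Qed.

Lemma broom_conn : connected_graph (broom n D).
Proof.
have Hz' : forall a, connect (broom n D) z a.
  by move=> a; apply: (@ball_connect _ _ _ D); rewrite ball_broom in_set leqnn orbT.
move=> a b; apply: connect_trans (Hz' b).
by rewrite (sym_connect_sym broom_sym).
Qed.

Variable R : realFieldType.
Variable lam : R.
Hypothesis l1 : lam < 1.

Lemma te_broom : te (broom n D) lam z = broom_bound n D lam.
Proof.
have -> : te (broom n D) lam z = \sum_(v : 'I_n) f lam (minn v D).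
  rewrite (bigD1 z) //= Hz min0n /f mul0r add0r.
  by apply: eq_big => [v|v _] //; rewrite dist_broom.
rewrite -(big_mkord xpredT (fun v => f lam (minn v D))) (big_cat_nat _ (n:=D.+1)) //=.
rewrite (bb_sum l1) big_mkord.
congr (_ + _).
  by apply: eq_bigr => i _; rewrite (minn_idPl _) // -ltnS.
rewrite (@eq_big_nat _ _ _ _ _ _ (fun _ => f lam D)); last by move=> i /andP[Hi _]; rewrite (minn_idPr _) // ltnW.
rewrite sumr_const_nat; have -> : (n - D - 1 = n - D.+1)%N by lia.
by rewrite mulr_natl.
Qed.
End Broom.

End BB.

Unset Implicit Arguments. Set Strict Implicit.
Local Open Scope ring_scope.

Lemma part1 (R : realFieldType) (lam : R) (T : finType) (e : rel T) :
  0 < lam -> lam < 1 -> (2 <= #|T|)%N -> connected_graph e ->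
  min_broom_bound #|T| lam <= mte e lam.
Proof.
move=> l0 l1 HN Hconn; rewrite /mte; case: pickP => [u0 _|H]; last first.
  by case/card_gt0P: (ltnW HN) => x _; move: (H x).
have Hc : forall u v, exists2 k, (k < #|T|)%N & v \in ball e k u.
  by move=> u v; apply: connect_ball; apply: Hconn.
apply: le_bigmin => [|u _]; exact: te_ge.
Qed.

Theorem theorem2 (R : realFieldType) (lam : R) (T : finType) (e : rel T) :
  0 < lam < 1 -> (2 <= #|T|)%N -> simple_graph e -> connected_graph e ->
  min_broom_bound #|T| lam <= mte e lam /\
  exists2 D : nat, (1 <= D <= #|T| - 1)%N &
    mte (broom #|T| D) lam = min_broom_bound #|T| lam /\
    (forall i0 : 'I_#|T|, nat_of_ord i0 = 0%N ->
       te (broom #|T| D) lam i0 = min_broom_bound #|T| lam).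
Proof.
move=> /andP[l0 l1] HN _ Hconn.
split; first exact: part1.
have [D HD HbD] : exists2 D, (1 <= D < #|T|)%N &
    min_broom_bound #|T| lam = broom_bound #|T| D lam.
  rewrite /min_broom_bound big_seq.
  apply: (big_ind (fun y => exists2 D, (1 <= D < #|T|)%N & y = broom_bound #|T| D lam)).
  - by exists 1%N => //; lia.
  - move=> x y [a Ha ->] [b Hb ->]; rewrite minEle; case: ifP => _; [exists a|exists b] => //.
  - by move=> i; rewrite mem_index_iota => Hi; exists i.
have N0 : (0 < #|T|)%N by lia.
have D1 : (1 <= D)%N by case/andP: HD.
have Dn : (D < #|T|)%N by case/andP: HD.
exists D; first lia.
split; last by move=> i0 Hi0; rewrite (te_broom D1 Dn Hi0 l1) HbD.
pose z : 'I_#|T| := Ordinal N0.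
have Hz : nat_of_ord z = 0%N by [].
apply/eqP; rewrite eq_le; apply/andP; split.
  rewrite /mte; case: pickP => [u0 _|H]; last by move: (H z).
  by apply: le_trans (bigmin_le _ z _) _; rewrite (te_broom D1 Dn Hz l1) HbD.
have HN' : (2 <= #|'I_#|T| |)%N by rewrite card_ord.
have := @part1 R lam _ _ l0 l1 HN' (broom_conn D1 Dn Hz).
by rewrite card_ord.
Qed.
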